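(* Consider the $T$-round online first-price auction problem described in the context. For any integer $L_T\in\{1,\dots,T\}$ with $L_T\le\frac T3$, \[ \inf_{\pi\in\Pi}\ \sup_{(v_t,m_t)_{t=1}^T\in\mathcal{L}}\mathbb{E}[\mathrm{DR}_T(\pi)]\ge\frac{L_T}{8}. \]
   Context: Online first-price auction over $T$ rounds: at each round $t$ the learner observes a private value $v_t\in[0,1]$, submits a bid $b_t\in[0,1]$, then observes $m_t\in[0,1]$, the highest bid of the other bidders, and receives reward $r(b_t;v_t,m_t)$ with $r(b;v,m)\coloneqq(v-b)\mathbbm{1}(b\ge m)$. An admissible policy $\pi\in\Pi$ is a sequence of measurable functions $\pi_t$ with $b_t=\pi_t((v_s,m_s)_{s=1}^{t-1},v_t,U)$, where $U$ is the learner's internal random variable. The expected dynamic regret is $\mathbb{E}[\mathrm{DR}_T(\pi)]\coloneqq\sum_{t=1}^T\max\{v_t-m_t,0\}-\sum_{t=1}^T\mathbb{E}[r(b_t;v_t,m_t)]$. $\mathcal{L}\coloneqq\{(v_t,m_t)_{t=1}^T\in[0,1]^{2T}:\sum_{t=2}^T\mathbbm{1}(m_t\ne m_{t-1})\le L_T\}$. *)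

(* Defs.v *)
From HB Require Import structures.
From mathcomp Require Import all_boot all_order all_algebra.
From mathcomp Require Import all_classical all_reals all_analysis.
Set Implicit Arguments. Unset Strict Implicit. Unset Printing Implicit Defensive.
Import Order.TTheory GRing.Theory Num.Theory.
Local Open Scope ring_scope.
Local Open Scope classical_set_scope.

(* Rounds are indexed by t = 0, ..., T-1 (paper: 1, ..., T).
   A value/competing-bid sequence is a pair of functions v m : nat -> R
   (only the values at t < T matter). *)

Definition reward (R : realType) (b v m : R) : R :=
  (v - b) * (if m <= b then 1 else 0).

(* A policy: the bid at round t is  pi t v m (v t) U,  where pi t may depend
   on (v, m) only through the history (v s, m s)_{s < t} (causality), and U
   is the learner's internal random variable, living on a probability space
   (Omega, P). *)
Definition admissible (R : realType) d (Omega : measurableType d)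
    (pi : nat -> (nat -> R) -> (nat -> R) -> R -> Omega -> R) : Prop :=
  [/\ (forall t v m x w, 0 <= pi t v m x w <= 1),
      (forall t v v' m m', (forall s, (s < t)%N -> v s = v' s /\ m s = m' s) ->
          pi t v m = pi t v' m') &
      (forall t v m x, measurable_fun setT (pi t v m x))].

Definition in_class (R : realType) (T LT : nat) (v m : nat -> R) : Prop :=
  (forall t, (t < T)%N -> 0 <= v t <= 1 /\ 0 <= m t <= 1) /\
  (\sum_(1 <= t < T) (m t != m t.-1 : nat) <= LT)%N.

Definition exp_dyn_regret (R : realType) d (Omega : measurableType d)
    (P : probability Omega R)
    (pi : nat -> (nat -> R) -> (nat -> R) -> R -> Omega -> R)
    (T : nat) (v m : nat -> R) : \bar R :=
  (\sum_(t < T) (Num.max (v t - m t) 0)%:E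
   - \sum_(t < T) \int[P]_w (reward (pi t v m (v t) w) (v t) (m t))%:E)%E.

(* Main.v *)
Set Warnings "-notation-overridden,-ambiguous-paths,-notation-incompatible-prefix".
Require Import Defs.
Set Warnings "-notation-overridden,-ambiguous-paths,-notation-incompatible-prefix".
From HB Require Import structures.
From mathcomp Require Import all_boot all_order all_algebra.
From mathcomp Require Import all_classical all_reals all_analysis.
From mathcomp Require Import measurable_realfun measurable_fun_approximation.
From mathcomp Require Import lra zify.
Import Order.TTheory GRing.Theory Num.Theory.
Local Open Scope ring_scope.
Local Open Scope classical_set_scope.

Section Aux.
Variables (R : realType) (d : measure_display) (Omega : measurableType d)
    (P : probability Omega R).

Lemma mreward (b : Omega -> R) (c : R) : measurable_fun setT b ->
  measurable_fun setT (fun w => reward (b w) 1 c).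
Proof.
move=> mb; rewrite /reward; apply: measurable_funM.
  by apply: measurable_funB => //; exact: measurable_cst.
apply: measurable_fun_ifT => //; try exact: measurable_cst.
by apply: measurable_fun_ler => //; exact: measurable_cst.
Qed.

Lemma reward_bnd (x c : R) : 0 <= x <= 1 -> 0 <= c <= 1 ->
  0 <= reward x 1 c <= 1 - c.
Proof.
move=> /andP[x0 x1] /andP[c0 c1]; rewrite /reward; case: ifP => h.
  by rewrite mulr1 subr_ge0 x1 /= lerB.
by rewrite mulr0 lexx /= subr_ge0; move/negbT: h; rewrite -ltNge => h; lra.
Qed.

Lemma J_bnd (b : Omega -> R) (c : R) : measurable_fun setT b ->
  (forall w, 0 <= b w <= 1) -> 0 <= c <= 1 ->
  let J := (\int[P]_w (reward (b w) 1 c)%:E)%E in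
  J = (fine J)%:E /\ 0 <= fine J <= 1 - c.
Proof.
move=> mb b01 c0 J.
have J0 : (0 <= J)%E.
  by apply: integral_ge0 => w _; rewrite lee_fin; case/andP: (@reward_bnd (b w) c (b01 w) c0).
have J1 : (J <= (1 - c)%:E)%E.
  apply: le_trans (_ : \int[P]_w (cst (1 - c)%:E) w <= _)%E.
    apply: ge0_le_integral => //.
    - by move=> w _; rewrite lee_fin; case/andP: (@reward_bnd (b w) c (b01 w) c0).
    - by apply/measurable_EFinP; exact: mreward.
    - by move=> w _; rewrite lee_fin; case/andP: (@reward_bnd (b w) c (b01 w) c0).
  by rewrite integral_cst // [X in (_ * X)%E](probability_setT P) mule1.

have fJ : J \is a fin_num by rewrite ge0_fin_numE // (le_lt_trans J1) ?ltry.
split; first by rewrite fineK.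
by rewrite -!lee_fin fineK // J0 J1.
Qed.

Lemma J_sum (b : Omega -> R) : measurable_fun setT b ->
  (forall w, 0 <= b w <= 1) ->
  (\int[P]_w (reward (b w) 1 0)%:E + \int[P]_w (reward (b w) 1 (1/2))%:E <= 1)%E.
Proof.
move=> mb b01.
have h0 w : (0 <= (reward (b w) 1 0)%:E)%E.
  by rewrite lee_fin; case/andP: (@reward_bnd (b w) 0 (b01 w) ltac:(lra)).
have h1 w : (0 <= (reward (b w) 1 (1/2))%:E)%E.
  by rewrite lee_fin; case/andP: (@reward_bnd (b w) (1/2) (b01 w) ltac:(lra)).
rewrite -ge0_integralD //; try (by move=> ??; apply h0); try (by move=> ??; apply h1);
  try (by apply/measurable_EFinP; exact: mreward).
apply: le_trans (_ : \int[P]_w (cst 1%:E) w <= _)%E.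
  apply: ge0_le_integral => //.
  - by move=> w _; apply: adde_ge0.
  - by apply: emeasurable_funD; apply/measurable_EFinP; exact: mreward.
  - move=> w _; rewrite -EFinD lee_fin /reward; case/andP: (b01 w) => b0 b1.
    rewrite b0 mulr1; case: (lerP (1/2) (b w)) => h; lra.
by rewrite integral_cst // [X in (_ * X)%E](probability_setT P) mule1.

Qed.

Lemma choose_c (b : Omega -> R) : measurable_fun setT b ->
  (forall w, 0 <= b w <= 1) ->
  exists c : R, (c = 0 \/ c = 1/2) /\
    1/4 <= Num.max (1 - c) 0 - fine (\int[P]_w (reward (b w) 1 c)%:E)%E.
Proof.
move=> mb b01.
have [E0 _] := @J_bnd b 0 mb b01 ltac:(lra).
have [Eh _] := @J_bnd b (1/2) mb b01 ltac:(lra).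
have S := @J_sum b mb b01.
rewrite E0 Eh -EFinD lee_fin in S.
set j0 := fine _ in S E0; set jh := fine _ in S Eh.
have [h|h] := lerP j0 (3/4).
  exists 0; split; first by left.
  have -> : Num.max (1 - 0) 0 = 1 :> R by rewrite subr0 max_l //; lra.
  rewrite -/j0; lra.
exists (1/2); split; first by right.
have -> : Num.max (1 - 1/2) 0 = 1/2 :> R by rewrite max_l //; lra.
rewrite -/jh; lra.
Qed.
End Aux.

Theorem theorem5 (R : realType) (d : measure_display) (Omega : measurableType d)
    (P : probability Omega R) (T LT : nat) :
  (1 <= LT)%N -> (LT <= T)%N -> (3 * LT <= T)%N ->
  forall pi : nat -> (nat -> R) -> (nat -> R) -> R -> Omega -> R,
    admissible pi ->
    ((LT%:R / 8 : R)%:E <=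
      ereal_sup [set r : \bar R | exists v m : nat -> R,
                   in_class T LT v m /\ r = exp_dyn_regret P pi T v m])%E.
Proof.
move=> H1 HLT _ pi [H01 Hc Hm].
pose v1 := fun _ : nat => 1 : R.
pose g t (m : nat -> R) := Num.max (1 - m t) 0 -
   fine (\int[P]_w (reward (pi t v1 m 1 w) 1 (m t))%:E)%E.
have claim k : exists m : nat -> R, (forall t, m t = 0 \/ m t = 1/2) /\
    (forall t, (k <= t)%N -> m t = m k.-1) /\ k%:R / 4 <= \sum_(t < k) g t m.
  elim: k => [|k [m [Hv [Hk Hs]]]].
    exists (fun _ => 0); split; first by left.
    by split => //; rewrite big_ord0 mul0r.
  have [c [Hcv Hcg]] := @choose_c R d Omega P _ (Hm k v1 m 1) (fun w => H01 k v1 m 1 w).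
  pose m' := fun t => if (t < k)%N then m t else c.
  have Heq t : (t <= k)%N -> pi t v1 m' = pi t v1 m.
    move=> tk; apply: Hc => s st; split => //.
    by rewrite /m' (leq_trans st tk).
  exists m'; split.
    by move=> t; rewrite /m'; case: ifP.
  split.
    by move=> t kt; rewrite /m' /= ltnn ltnNge (ltnW kt).
  rewrite big_ord_recr /=.
  have -> : \sum_(i < k) g i m' = \sum_(i < k) g i m.
    apply: eq_bigr => i _; rewrite /g Heq ?(ltnW (ltn_ord i)) //.
    by rewrite /m' ltn_ord.
  have -> : g k m' = Num.max (1 - c) 0 -
      fine (\int[P]_w (reward (pi k v1 m 1 w) 1 c)%:E)%E.
    by rewrite /g Heq // /m' ltnn.
  rewrite -addn1 natrD mulrDl; lra.
have [m [Hv [Hk Hs]]] := claim LT.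
have m01 t : 0 <= m t <= 1 by case: (Hv t) => ->; apply/andP; split; lra.
have mle t : m t <= 1/2 by case: (Hv t) => ->; lra.
have Jt t := @J_bnd R d Omega P _ (m t) (Hm t v1 m 1) (fun w => H01 t v1 m 1 w) (m01 t).
have gge0 t : 0 <= g t m.
  have [_ /andP[_ h]] := Jt t.
  rewrite /g max_l; first by rewrite subr_ge0.
  by have := mle t; lra.
have ER : exp_dyn_regret P pi T v1 m = (\sum_(t < T) g t m)%:E.
  rewrite /exp_dyn_regret /g sumrB EFinB !sumEFin.
  congr (_ - _)%E; rewrite -sumEFin; apply: eq_bigr => t _.
  by case: (Jt t).
have HIC : in_class T LT v1 m.
  split.
    move=> t _; split => //; rewrite /v1; apply/andP; split; lra.
  have Hk' t : (LT.-1 <= t)%N -> m t = m LT.-1.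
    move=> h; have [->//|] := eqVneq t LT.-1 => ne; apply: Hk.
    by move: h ne H1; clear; lia.
  rewrite (@big_cat_nat _ _ _ LT 1 T _ _ H1 HLT) /=.
  have -> : (\sum_(LT <= t < T) (m t != m t.-1 : nat) = 0)%N.
    rewrite big_nat_cond big1 // => t /andP[/andP[h1 h2] _].
    rewrite (Hk' t) ?(Hk' t.-1) ?eqxx //; move: h1 H1; clear; lia.
  rewrite addn0.
  apply: (@leq_trans (\sum_(1 <= i < LT) 1)%N); first by apply: leq_sum => i _; exact: leq_b1.
  rewrite sum_nat_const_nat; move: H1; clear; lia.
apply: le_trans (ereal_sup_ubound _); last first.
  by exists v1, m; split.
rewrite ER lee_fin.
apply: le_trans (_ : LT%:R / 4 <= _).
  have : 0 <= LT%:R :> R by apply: ler0n.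
  lra.
rewrite -(big_mkord xpredT (fun t => g t m)) (@big_cat_nat _ _ _ LT 0 T _ _ (leq0n LT) HLT) /=.
rewrite big_mkord.
have : 0 <= \sum_(LT <= i < T) g i m by apply: sumr_ge0 => i _.
lra.
Qed.
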